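(* Let $G$ be a finite group with identity $e$, $R[G]$ its real group algebra, $S=\{x\in R[G]:\sum_gx_g=1,\ x_g\ge0\ \forall g\}$, and $x\in S$. Then (1) $n_{xc_x}\le m_x$; (2) if $n_{xc_x}=n_x$ then $n_x=m_x=m_{xc_x}$.
   Context: $\mathrm{Supp}(y)=\{g:y_g\ne0\}$, $\mathbb N=\{1,2,\dots\}$. For $y\in S$: $n_y=\min\{k\in\mathbb N:(y^k)_e\ne0\}$; $G_y$ is the subgroup generated by $\mathrm{Supp}(y^{n_y})$; $c_y=\frac1{|G_y|}\sum_{g\in G_y}g$; $m_y=\min\{k\in\mathbb N:\mathrm{Supp}(y^k)\subset G_y\}$. Note $xc_x\in S$. *)

(* Defs.v *)
From HB Require Import structures.
From mathcomp Require Import all_boot all_order all_algebra all_fingroup.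
From Stdlib Require Import ClassicalEpsilon.
Set Implicit Arguments. Unset Strict Implicit. Unset Printing Implicit Defensive.
Import Order.TTheory GRing.Theory Num.Theory.

Local Open Scope ring_scope.

Section GroupAlgebra.
Variables (gT : finGroupType) (R : realFieldType).

(* Elements of the real group algebra R[G], G = the whole finite group gT. *)
Definition galg := {ffun gT -> R}.

Definition gmul (x y : galg) : galg :=
  [ffun g => \sum_(h : gT) x h * y (h^-1 * g)%g].

Definition gone : galg := [ffun g => if g == 1%g then 1 else 0].

Definition gpow (y : galg) (k : nat) : galg := iter k (fun z => gmul z y) gone.

Definition Supp (y : galg) : {set gT} := [set g | y g != 0].

Definition inS (x : galg) : Prop :=
  \sum_(g : gT) x g = 1 /\ forall g, 0 <= x g.

(* least k : nat satisfying P, and 0 if there is none (never used in that case). *)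
Definition least (P : pred nat) : nat :=
  match excluded_middle_informative (exists n, P n) with
  | left h => ex_minn h
  | right _ => 0%N
  end.

Definition n_ (y : galg) : nat := least (fun k => (0 < k)%N && (gpow y k 1%g != 0)).

Definition G_ (y : galg) : {set gT} := <<Supp (gpow y (n_ y))>>%g.

Definition c_ (y : galg) : galg :=
  [ffun g => if g \in G_ y then (#|G_ y|%:R)^-1 else 0].

Definition m_ (y : galg) : nat := least (fun k => (0 < k)%N && (Supp (gpow y k) \subset G_ y)).

End GroupAlgebra.

(* Main.v *)
Require Import Defs.
From mathcomp Require Import all_boot all_order all_algebra all_fingroup.
From Stdlib Require Import ClassicalEpsilon.
Import GRing.Theory Num.Theory Order.TTheory.
Set Implicit Arguments. Unset Strict Implicit.

Section Aux.
Variables (gT : finGroupType) (R : realFieldType).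
Local Open Scope ring_scope.

Definition nneg (y : galg gT R) := forall g, 0 <= y g.

Lemma nneg_mul y z : nneg y -> nneg z -> nneg (gmul y z).
Proof. by move=> hy hz g; rewrite ffunE; apply: sumr_ge0 => h _; apply: mulr_ge0. Qed.

Lemma supp_mul y z : nneg y -> nneg z -> Supp (gmul y z) = (Supp y * Supp z)%g.
Proof.
move=> hy hz; apply/setP => g; rewrite inE ffunE; apply/idP/mulsgP.
- move=> nz.
  case: (pickP (fun h => y h * z (h^-1 * g)%g != 0%R)) => [h|none]; last first.
    by move: nz; rewrite big1 ?eqxx // => h _; apply/eqP; move/negbFE: (none h).
  rewrite mulf_eq0 negb_or => /andP[yh zh].
  by exists h (h^-1 * g)%g; rewrite ?inE // mulKVg.
- case=> h k; rewrite !inE => yh zk ->.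
  have pos : 0 < y h * z (h^-1 * (h * k))%g.
    by rewrite mulKg mulr_gt0 // lt_def ?yh ?zk ?hy ?hz.
  rewrite (bigD1 h) //= gt_eqF //; apply: (lt_le_trans pos).
  by rewrite lerDl; apply: sumr_ge0 => i _; apply: mulr_ge0.
Qed.

Lemma supp_one : Supp (gone gT R) = 1%g.
Proof.
apply/setP => g; rewrite set1gE !inE ffunE; case: (g == 1%g) => /=; by rewrite ?oner_eq0 ?eqxx.
Qed.

Lemma nneg_one : nneg (gone gT R).
Proof. by move=> g; rewrite ffunE; case: eqP. Qed.

Lemma pow_prop y k : nneg y -> nneg (gpow y k) /\ Supp (gpow y k) = (Supp y ^+ k)%g.
Proof.
move=> hy; elim: k => [|k [IH1 IH2]]; first by split; [apply: nneg_one| apply: supp_one].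
rewrite /gpow iterS -/(gpow y k); split; first exact: nneg_mul.
by rewrite supp_mul // IH2 expgSr.
Qed.

Lemma leastP (P : pred nat) : (exists n, P n) ->
  P (least P) /\ forall k, P k -> (least P <= k)%N.
Proof.
move=> ex; rewrite /least; case: excluded_middle_informative => [h|//].
by case: ex_minnP => n Pn min; split.
Qed.

End Aux.

Lemma mem_expset (gT : finGroupType) (A : {set gT}) a k :
  a \in A -> (a ^+ k)%g \in (A ^+ k)%g.
Proof.
move=> aA; elim: k => [|k IH]; first by rewrite !expg0 set1gE inE.
by rewrite !expgSr mem_mulg.
Qed.

Theorem proposition4 (gT : finGroupType) (R : realFieldType) (x : galg gT R) :
  inS x ->
  (n_ (gmul x (c_ x)) <= m_ x)%N /\
  (n_ (gmul x (c_ x)) = n_ x ->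
     n_ x = m_ x /\ m_ x = m_ (gmul x (c_ x))).
Proof.
move=> [sum1 hx].
have hxn : nneg x by [].
set A := Supp x.
have powx k : Supp (gpow x k) = (A ^+ k)%g by case: (pow_prop k hxn).
have [a aA] : exists a, a \in A.
  case: (pickP (mem A)) => [a aA|none]; first by exists a.
  move: sum1; rewrite big1 => [/eqP|g _]; first by rewrite eq_sym oner_eq0.
  by move: (none g); rewrite /= /A inE; case: eqP.
have neA k : exists g, g \in (A ^+ k)%g by exists (a ^+ k)%g; apply: mem_expset.
have exN : exists n, (0 < n)%N && (gpow x n 1%g != 0%R).
  exists #[a]%g; rewrite order_gt0 /=.
  have := mem_expset #[a]%g aA; rewrite expg_order -powx inE; done.
have [PN minN] := leastP exN.
rewrite -/(n_ x) in PN minN.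
set N := n_ x in PN minN *.
move: PN => /andP[N0 PN].
have HE : G_ x = <<(A ^+ N)%g>>%g by rewrite /G_ -/N powx.
set H := <<(A ^+ N)%g>>%G.
have ANH : (A ^+ N \subset H)%g by apply: subset_gen.
have suppc : Supp (c_ x) = H.
  apply/setP => g; rewrite inE ffunE HE; case: (g \in H) => //=; last by rewrite eqxx.
  by rewrite invr_eq0 pnatr_eq0 -lt0n cardG_gt0.
have hcn : nneg (c_ x).
  by move=> g; rewrite ffunE; case: ifP => // _; rewrite invr_ge0 ler0n.
set y := gmul x (c_ x).
have hyn : nneg y by apply: nneg_mul.
have suppy : Supp y = (A * H)%g by rewrite supp_mul // suppc.
have powy k : Supp (gpow y k) = ((A * H) ^+ k)%g by case: (pow_prop k hyn) => _ ->; rewrite suppy.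
set K := [set h | [forall b in A, (h * b)%g \in (A * H)%g]].
have gK : group_set K.
  apply/group_setP; split.
    rewrite inE; apply/forall_inP => b bA; rewrite mul1g -[b]mulg1 mem_mulg //.
  move=> h1 h2; rewrite !inE => /forall_inP K1 /forall_inP K2.
  apply/forall_inP => b bA; rewrite -mulgA.
  case/mulsgP: (K2 b bA) => b' k bA' kH ->.
  rewrite mulgA; case/mulsgP: (K1 b' bA') => b'' k' bA'' kH' ->.
  by rewrite -mulgA mem_mulg // groupM.
have HK : (H \subset K)%g.
  change (<<(A ^+ N)%g>>%g \subset Group gK)%g; rewrite gen_subG; apply/subsetP => h hN; rewrite inE; apply/forall_inP => b bA.
  have : (h * b)%g \in (A ^+ N.+1)%g by rewrite expgSr mem_mulg.
  rewrite expgS; apply/subsetP; apply: mulgS; exact: ANH.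
have HA : (H * A \subset A * H)%g.
  apply/subsetP => g /mulsgP[h b hH bA ->].
  by move/subsetP: HK => /(_ h hH); rewrite inE => /forall_inP; apply.
have HAH : (H * (A * H) = A * H)%g.
  apply/eqP; rewrite eqEsubset; apply/andP; split.
    rewrite mulgA; apply: (subset_trans (mulSg _ HA)); rewrite -mulgA mulGid; exact: subxx.
  rewrite -{1}[(A * H)%g]mul1g; apply: mulSg; exact: sub1G.
have powAH k : ((A * H) ^+ k.+1 = A ^+ k.+1 * H)%g.
  elim: k => [|k IH]; first by rewrite !expg1.
  by rewrite expgSr IH -mulgA HAH mulgA -expgSr.
have AsubAH (B : {set gT}) : (B \subset B * H)%g.
  rewrite -{1}[B]mulg1; apply: mulgS; exact: sub1G.
have AHsubH (B : {set gT}) : (B \subset H)%g -> (B * H \subset H)%g.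
  move=> BH; rewrite -{2}(mulGid H); exact: mulSg.
have exM : exists k, (0 < k)%N && (Supp (gpow x k) \subset G_ x).
  by exists N; rewrite N0 powx HE ANH.
have [PM minM] := leastP exM.
rewrite -/(m_ x) in PM minM.
set M := m_ x in PM minM *.
move: PM => /andP[M0]; rewrite powx HE => PM.
have MN : (M <= N)%N by apply: minM; rewrite N0 powx HE ANH.
have exNc : exists n, (0 < n)%N && (gpow y n 1%g != 0%R).
  exists M; rewrite M0 /= (_ : (gpow y M 1%g != 0%R) = (1%g \in Supp (gpow y M))); last by rewrite inE.
  rewrite powy.
  case: M M0 PM {minM MN} => // M' _ PM; rewrite powAH.
  have [g gA] := neA M'.+1.
  have gH : g \in H by move/subsetP: PM; apply.
  by rewrite -(mulgV g) mem_mulg // groupV.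
have [_ minNc] := leastP exNc.
rewrite -/(n_ y) in minNc.
have part1 : (n_ y <= M)%N.
  apply: minNc; rewrite M0 /= (_ : (gpow y M 1%g != 0%R) = (1%g \in Supp (gpow y M))); last by rewrite inE.
  rewrite powy.
  case: M M0 PM {minM MN exNc} => // M' _ PM; rewrite powAH.
  have [g gA] := neA M'.+1.
  have gH : g \in H by move/subsetP: PM; apply.
  by rewrite -(mulgV g) mem_mulg // groupV.
split => // eqN.
have NM : N = M by apply/eqP; rewrite eqn_leq MN -eqN part1.
split => //.
have [N' NE] : exists N', N = N'.+1 by case: (N) N0 => // n _; exists n.
have Gy : G_ y = H.
  rewrite /G_ eqN -/N powy NE powAH.
  apply/eqP; rewrite eqEsubset; apply/andP; split.
    rewrite gen_subG; apply: AHsubH; rewrite -NE; exact: ANH.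
  rewrite {1}/H /= gen_subG -NE; exact: subset_trans (AsubAH _) (subset_gen _).
have equiv k : ((0 < k)%N && (Supp (gpow y k) \subset G_ y)) =
               ((0 < k)%N && (Supp (gpow x k) \subset G_ x)).
  rewrite powy powx Gy HE; case: k => // k'; rewrite powAH /=.
  apply/idP/idP => h; first exact: subset_trans (AsubAH _) h.
  exact: AHsubH.
have exMy : exists k, (0 < k)%N && (Supp (gpow y k) \subset G_ y).
  by exists M; rewrite equiv M0 powx HE PM.
have [PMy minMy] := leastP exMy.
rewrite -/(m_ y) in PMy minMy.
apply/eqP; rewrite eqn_leq; apply/andP; split.
  by apply: minM; rewrite -equiv.
by apply: minMy; rewrite equiv M0 powx HE PM.
Qed.
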